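(* Let $\mathcal{M}$ be the family of $3$-graphs defined in the context. A $3$-graph $\mathcal{H}$ is $\mathcal{M}$-free if and only if it is $\mathcal{M}$-hom-free.
   Context: A $3$-graph is a $3$-uniform hypergraph; $\mathcal{F}$-free means containing no member of $\mathcal{F}$ as a subgraph; ''contained in'' means isomorphic to a subgraph of. A map $f:V(F)\to V(\mathcal{H})$ is a homomorphism if $f(E)\in\mathcal{H}$ for every $E\in F$ (in particular $f$ is injective on each edge). $\mathcal{H}$ is $F$-hom-free if there is no homomorphism from $F$ to $\mathcal{H}$, and $\mathcal{F}$-hom-free if it is $F$-hom-free for all $F\in\mathcal{F}$. Transversal number $\tau(\mathcal{H})$: minimum size of a vertex set meeting every edge ($0$ if no edges). For $\ell\ge3$, $\mathcal{K}^3_{\ell+1}$: all $3$-graphs $F$ on at most $(\ell+1)+\binom{\ell+1}{2}$ vertices having an $(\ell+1)$-set $S$ (a core) every pair of which lies in an edge of $F$. Blowup of a $3$-graph $\mathcal{T}$ on $[s]$: replace vertex $i$ by a set of size $t_i\ge1$ (pairwise disjoint), each edge by the complete $3$-partite $3$-graph on the corresponding sets. $\mathcal{G}^1_n$: disjoint $A,B$, $|A|=\lfloor n/3\rfloor$, $|B|=\lceil 2n/3\rceil$, edges $\{a,b,b'\}$ with $a\in A$, $\{b,b'\}\subseteq B$. $\mathcal{G}^2_6$: all triples of $[6]$ except $\{1,2,3\},\{1,2,6\},\{3,4,5\},\{4,5,6\}$; for $n>6$, $\mathcal{G}^2_n$ is a blowup of $\mathcal{G}^2_6$ on $n$ vertices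 with maximum number of edges. $\mathcal{M}=M_1\cup M_2\cup M_3$ with $M_1=\{K_5^{3-}\}$ (complete $3$-graph on $5$ vertices minus an edge), $M_2$ = all $F\in\mathcal{K}^3_7$ with a core $S$ such that $\tau(F[S])\ge2$, $M_3$ = all $F\in\mathcal{K}^3_6$ not contained in $\mathcal{G}^1_n$ for any $n\ge1$ and not contained in $\mathcal{G}^2_n$ for any $n\ge6$. *)

(* Defs.v *)
From mathcomp Require Import all_boot.
Set Implicit Arguments. Unset Strict Implicit. Unset Printing Implicit Defensive.

Definition is3graph (T : finType) (E : {set {set T}}) : Prop :=
  forall e, e \in E -> #|e| = 3.

(* f : V(F) -> V(H) is a homomorphism: f(E) \in H for every edge E of F.
   (Since H is 3-uniform, f is then injective on each edge.) *)
Definition hom (T U : finType) (F : {set {set T}}) (H : {set {set U}})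
  (f : T -> U) : Prop := forall e, e \in F -> f @: e \in H.

Definition has_hom (T U : finType) (F : {set {set T}}) (H : {set {set U}}) :=
  exists f : T -> U, hom F H f.

Definition contained (T U : finType) (F : {set {set T}}) (H : {set {set U}}) :=
  exists f : T -> U, injective f /\ hom F H f.

Definition isomorphic (T U : finType) (F : {set {set T}}) (H : {set {set U}}) :=
  exists f : T -> U, bijective f /\ forall e, (e \in F) = (f @: e \in H).

Definition transversal (T : finType) (E : {set {set T}}) (X : {set T}) : bool :=
  [forall e in E, X :&: e != set0].

Definition tau (T : finType) (E : {set {set T}}) : nat :=
  \big[minn/#|T|]_(X : {set T} | transversal E X) #|X|.

Definition induced (T : finType) (E : {set {set T}}) (S : {set T}) :
  {set {set T}} := [set e in E | e \subset S].

Definition is_core (T : finType) (E : {set {set T}}) (S : {set T}) : Prop :=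
  forall x y, x \in S -> y \in S -> x != y ->
    exists2 e, e \in E & (x \in e) && (y \in e).

(* Membership of the 3-graph F = ('I_k, E) in K^3_m  (m = l+1). *)
Definition inK (m k : nat) (E : {set {set 'I_k}}) : Prop :=
  [/\ is3graph E, k <= m + 'C(m, 2) &
      exists S : {set 'I_k}, #|S| = m /\ is_core E S].

(* K_5^{3-}: all triples of [5] except {1,2,3} (vertices 0..4 here). *)
Definition K5minus : {set {set 'I_5}} :=
  [set e : {set 'I_5} | (#|e| == 3) &&
     (e != [set (inord 0 : 'I_5); inord 1; inord 2])].

(* G^1_n : A = first floor(n/3) vertices, B = the rest. *)
Definition G1 (n : nat) : {set {set 'I_n}} :=
  [set e : {set 'I_n} | (#|e| == 3) &&
     (#|e :&: [set i : 'I_n | i < n %/ 3]| == 1)].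

(* G^2_6 (vertices 1..6 renamed 0..5). *)
Definition G26 : {set {set 'I_6}} :=
  [set e : {set 'I_6} | [&& #|e| == 3,
     e != [set (inord 0 : 'I_6); inord 1; inord 2],
     e != [set (inord 0 : 'I_6); inord 1; inord 5],
     e != [set (inord 2 : 'I_6); inord 3; inord 4] &
     e != [set (inord 3 : 'I_6); inord 4; inord 5]]].

(* The blowup of G^2_6 on vertex set 'I_n given by a surjective part map p
   (part i has size t_i = #|p^-1(i)| >= 1). *)
Definition blowup26 (n : nat) (p : 'I_n -> 'I_6) : {set {set 'I_n}} :=
  [set e : {set 'I_n} | (#|e| == 3) && (p @: e \in G26)].

Definition surj (n : nat) (p : 'I_n -> 'I_6) : Prop := forall i, exists x, p x = i.

(* p yields a blowup of G^2_6 on n vertices with maximum number of edges,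
   i.e. one of the 3-graphs G^2_n (for n = 6 this is G^2_6 itself). *)
Definition is_G2 (n : nat) (p : 'I_n -> 'I_6) : Prop :=
  surj p /\ forall q : 'I_n -> 'I_6, surj q -> #|blowup26 q| <= #|blowup26 p|.

Definition inM1 (k : nat) (E : {set {set 'I_k}}) : Prop := isomorphic E K5minus.

Definition inM2 (k : nat) (E : {set {set 'I_k}}) : Prop :=
  [/\ is3graph E, k <= 7 + 'C(7, 2) &
      exists S : {set 'I_k}, [/\ #|S| = 7, is_core E S & 2 <= tau (induced E S)]].

Definition inM3 (k : nat) (E : {set {set 'I_k}}) : Prop :=
  [/\ inK 6 E,
      (forall n, 1 <= n -> ~ contained E (G1 n)) &
      (forall n (p : 'I_n -> 'I_6), 6 <= n -> is_G2 p -> ~ contained E (blowup26 p))].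

Definition inM (k : nat) (E : {set {set 'I_k}}) : Prop :=
  inM1 E \/ inM2 E \/ inM3 E.

Definition M_free (V : finType) (H : {set {set V}}) : Prop :=
  forall k (E : {set {set 'I_k}}), inM E -> ~ contained E H.

Definition M_hom_free (V : finType) (H : {set {set V}}) : Prop :=
  forall k (E : {set {set 'I_k}}), inM E -> ~ has_hom E H.

(* Main.v *)
From Stdlib Require Import ZArith Lia.
Require Import Defs.
From mathcomp Require Import all_boot.

Section ZPart.
Local Open Scope Z_scope.
Lemma fA (a v : Z) : 0 <= a -> 0 <= v -> 8100 * a * v^2 + 800 * v^3 <= 1512 * (a+v)^3.
Proof. intros.
assert (14 * (1512 * (a+v)^3 - 8100 * a * v^2 - 800 * v^3) = 14*1512*(a*a*a) + v*(81*((28*a-11*v)*(28*a-11*v)) + 167*(v*v))) by ring.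
assert (0 <= (28*a-11*v)*(28*a-11*v)) by apply Z.square_nonneg.
assert (0 <= v*v) by apply Z.square_nonneg.
assert (0 <= v*(81*((28*a-11*v)*(28*a-11*v)) + 167*(v*v))) by (apply Z.mul_nonneg_nonneg; lia).
assert (0 <= a*a*a) by (apply Z.mul_nonneg_nonneg; [apply Z.square_nonneg| lia]).
lia. Qed.
Lemma fB (z s : Z) : 0 <= z -> 0 <= s -> 100 * s^3 + 400 * z * s^2 <= 112 * (z+s)^3.
Proof. intros.
assert (3*(112 * (z+s)^3 - 100 * s^3 - 400 * z * s^2) = 3*112*(z*z*z) + s*(4*((3*s - 8*z)*(3*s-8*z)) + 752*(z*z))) by ring.
assert (0 <= (3*s-8*z)*(3*s-8*z)) by apply Z.square_nonneg.
assert (0 <= z*z) by apply Z.square_nonneg.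
assert (0 <= s*(4*((3*s - 8*z)*(3*s-8*z)) + 752*(z*z))) by (apply Z.mul_nonneg_nonneg; lia).
assert (0 <= z*z*z) by (apply Z.mul_nonneg_nonneg; [apply Z.square_nonneg| lia]).
lia. Qed.
Lemma amgm (r u : Z) : 0 <= r -> 0 <= u -> 27 * r^2 * u <= 4 * (r+u)^3.
Proof. intros.
assert (4 * (r+u)^3 - 27 * r^2 * u = ((r - 2*u)*(r-2*u)) * (4*r + u)) by ring.
assert (0 <= ((r - 2*u)*(r-2*u)) * (4*r + u)) by (apply Z.mul_nonneg_nonneg; [apply Z.square_nonneg|lia]).
lia. Qed.
Lemma EA_bound (a b c x y : Z) : 0 <= a -> 0 <= b -> 0 <= c -> 0 <= x -> 0 <= y ->
  100 * (a*b*c + (a*b+a*c+b*c)*(x+y) + a*x*y) <= 7 * (a+b+c+x+y)^3.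
Proof. intros.
assert (F1 : 0 <= a*((b-c)*(b-c))) by (apply Z.mul_nonneg_nonneg; [lia|apply Z.square_nonneg]).
assert (F2 : 0 <= ((b-c)*(b-c))*(x+y)) by (apply Z.mul_nonneg_nonneg; [apply Z.square_nonneg|lia]).
assert (F3 : 0 <= a*((x-y)*(x-y))) by (apply Z.mul_nonneg_nonneg; [lia|apply Z.square_nonneg]).
assert (F4 : 0 <= a*(((b+c)-(x+y))*((b+c)-(x+y)))) by (apply Z.mul_nonneg_nonneg; [lia|apply Z.square_nonneg]).
assert (F5 := amgm (b+c) (x+y) ltac:(lia) ltac:(lia)).
assert (F6 := fA a (b+c+x+y) ltac:(lia) ltac:(lia)).
assert (ID : 21600 * (a*b*c + (a*b+a*c+b*c)*(x+y) + a*x*y) + 2700 * (a*(((b+c)-(x+y))*((b+c)-(x+y))) + 2*(a*((b-c)*(b-c))) + 2*(((b-c)*(b-c))*(x+y)) + 2*(a*((x-y)*(x-y))))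
  = 8100 * a * (b+c+x+y)^2 + 200 * (27 * (b+c)^2 * (x+y))) by ring.
assert (E1 : 4 * (b+c+(x+y))^3 = 4 * (b+c+x+y)^3) by ring.
assert (E2 : (a+b+c+x+y)^3 = (a + (b+c+x+y))^3) by ring.
rewrite E2.
remember (a*b*c + (a*b+a*c+b*c)*(x+y) + a*x*y) as Q0 eqn:HQ0; clear HQ0.
remember (a*(((b+c)-(x+y))*((b+c)-(x+y)))) as Q1 eqn:HQ1; clear HQ1.
remember (a*((b-c)*(b-c))) as Q2 eqn:HQ2; clear HQ2.
remember (((b-c)*(b-c))*(x+y)) as Q3 eqn:HQ3; clear HQ3.
remember (a*((x-y)*(x-y))) as Q4 eqn:HQ4; clear HQ4.
remember (27 * (b + c) ^ 2 * (x + y)) as Q5 eqn:HQ5; clear HQ5.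
remember ((b + c + (x + y)) ^ 3) as Q6 eqn:HQ6; clear HQ6.
remember ((b + c + x + y) ^ 3) as Q7 eqn:HQ7; clear HQ7.
remember (8100 * a * (b + c + x + y) ^ 2) as Q8 eqn:HQ8; clear HQ8.
remember ((a + (b + c + x + y)) ^ 3) as Q9 eqn:HQ9; clear HQ9.
lia. Qed.
Lemma EB_bound (a b x y z : Z) : 0 <= a -> 0 <= b -> 0 <= x -> 0 <= y -> 0 <= z ->
  100 * (a*b*(x+y) + x*y*(a+b) + z*(a+b)*(x+y)) <= 7 * (a+b+x+y+z)^3.
Proof. intros.
assert (F1 : 0 <= ((a-b)*(a-b))*(x+y)) by (apply Z.mul_nonneg_nonneg; [apply Z.square_nonneg|lia]).
assert (F2 : 0 <= ((x-y)*(x-y))*(a+b)) by (apply Z.mul_nonneg_nonneg; [apply Z.square_nonneg|lia]).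
assert (F3 : 0 <= (((a+b)-(x+y))*((a+b)-(x+y)))*(a+b+x+y)) by (apply Z.mul_nonneg_nonneg; [apply Z.square_nonneg|lia]).
assert (F4 : 0 <= z*(((a+b)-(x+y))*((a+b)-(x+y)))) by (apply Z.mul_nonneg_nonneg; [lia|apply Z.square_nonneg]).
assert (F6 := fB z (a+b+x+y) ltac:(lia) ltac:(lia)).
assert (ID : 1600 * (a*b*(x+y) + x*y*(a+b) + z*(a+b)*(x+y)) + 100 * ((((a+b)-(x+y))*((a+b)-(x+y)))*(a+b+x+y) + 4 * (z*(((a+b)-(x+y))*((a+b)-(x+y)))) + 4 * (((a-b)*(a-b))*(x+y)) + 4 * (((x-y)*(x-y))*(a+b)))
   = 100 * (a+b+x+y)^3 + 400 * z * (a+b+x+y)^2) by ring.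
assert (E2 : (a+b+x+y+z)^3 = (z + (a+b+x+y))^3) by ring.
rewrite E2.
remember (a*b*(x+y) + x*y*(a+b) + z*(a+b)*(x+y)) as Q0 eqn:HQ0; clear HQ0.
remember (((a-b)*(a-b))*(x+y)) as Q1 eqn:HQ1; clear HQ1.
remember (((x-y)*(x-y))*(a+b)) as Q2 eqn:HQ2; clear HQ2.
remember ((((a+b)-(x+y))*((a+b)-(x+y)))*(a+b+x+y)) as Q3 eqn:HQ3; clear HQ3.
remember (z*(((a+b)-(x+y))*((a+b)-(x+y)))) as Q4 eqn:HQ4; clear HQ4.
remember ((a+b+x+y)^3) as Q5 eqn:HQ5; clear HQ5.
remember (400 * z * (a+b+x+y)^2) as Q6 eqn:HQ6; clear HQ6.
remember ((z + (a+b+x+y))^3) as Q7 eqn:HQ7; clear HQ7.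
lia. Qed.
Definition E6Z (t0 t1 t2 t3 t4 t5 : Z) :=
  t0*t1*t3 + t0*t1*t4 + t0*t2*t3 + t0*t2*t4 + t0*t2*t5 + t0*t3*t4 + t0*t3*t5 + t0*t4*t5
+ t1*t2*t3 + t1*t2*t4 + t1*t2*t5 + t1*t3*t4 + t1*t3*t5 + t1*t4*t5 + t2*t3*t5 + t2*t4*t5.

Lemma combine (P t L T S m : Z) : 0 <= t -> t <= 20 -> 0 <= L -> L <= S^2 -> 0 <= T -> T <= S ->
  100 * P <= 7 * T^3 -> S = 6 * m -> 1000 <= m -> P + t * L < 16 * m^3.
Proof. intros.
assert (T^3 <= S^3) by (apply Z.pow_le_mono_l; lia).
assert (t * L <= 20 * L) by (apply Z.mul_le_mono_nonneg_r; lia).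
assert (S^2 = 36 * (m*m)) by (rewrite H6; ring).
assert (S^3 = 216 * (m*m*m)) by (rewrite H6; ring).
assert (m^3 = m*m*m) by ring.
assert (0 < m*m) by nia.
assert (72000 * (m*m) < 88 * (m*m*m)).
{ assert (88 * (m*m*m) - 72000 * (m*m) = (m*m) * (88*m - 72000)) by ring. assert (0 < (m*m) * (88*m - 72000)) by (apply Z.mul_pos_pos; lia). lia. }
remember (T^3) as A; clear HeqA. remember (S^3) as B; clear HeqB. remember (S^2) as C; clear HeqC.
remember (m^3) as D; clear HeqD. remember (t * L) as F; clear HeqF.
remember (m*m*m) as G; clear HeqG. remember (m*m) as K; clear HeqK.
lia. Qed.
Lemma le_plus (L R : Z) : 0 <= R -> L <= L + R. Proof. lia. Qed.
Lemma caseZ0 (t0 t1 t2 t3 t4 t5 m : Z) : 0 <= t0 -> 0 <= t1 -> 0 <= t2 -> 0 <= t3 -> 0 <= t4 -> 0 <= t5 ->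
  t0+t1+t2+t3+t4+t5 = 6*m -> 1000 <= m -> t0 <= 20 -> E6Z t0 t1 t2 t3 t4 t5 < 16 * m^3.
Proof. intros.
assert (HE : E6Z t0 t1 t2 t3 t4 t5 = (t1*t2*t5 + (t1*t2+t1*t5+t2*t5)*(t3+t4) + t1*t3*t4) + t0 * (t1*t3 + t1*t4 + t2*t3 + t2*t4 + t2*t5 + t3*t4 + t3*t5 + t4*t5)) by (unfold E6Z; ring).
rewrite HE; clear HE.
assert (HS : (t0+t1+t2+t3+t4+t5)^2 = (t1*t3 + t1*t4 + t2*t3 + t2*t4 + t2*t5 + t3*t4 + t3*t5 + t4*t5) + (t0*t0 + 2*(t0*t1) + 2*(t0*t2) + 2*(t0*t3) + 2*(t0*t4) + 2*(t0*t5) + t1*t1 + 2*(t1*t2) + t1*t3 + t1*t4 + 2*(t1*t5) + t2*t2 + t2*t3 + t2*t4 + t2*t5 + t3*t3 + t3*t4 + t3*t5 + t4*t4 + t4*t5 + t5*t5)) by ring.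
apply (combine _ _ _ (t1+t2+t5+t3+t4) (t0+t1+t2+t3+t4+t5)).
- lia.
- lia.
- repeat apply Z.add_nonneg_nonneg; apply Z.mul_nonneg_nonneg; lia.
- rewrite HS; apply le_plus; repeat apply Z.add_nonneg_nonneg; repeat apply Z.mul_nonneg_nonneg; lia.
- lia.
- lia.
- apply (EA_bound t1 t2 t5 t3 t4); lia.
- lia.
- lia.
Qed.
Lemma caseZ1 (t0 t1 t2 t3 t4 t5 m : Z) : 0 <= t0 -> 0 <= t1 -> 0 <= t2 -> 0 <= t3 -> 0 <= t4 -> 0 <= t5 ->
  t0+t1+t2+t3+t4+t5 = 6*m -> 1000 <= m -> t1 <= 20 -> E6Z t0 t1 t2 t3 t4 t5 < 16 * m^3.
Proof. intros.
assert (HE : E6Z t0 t1 t2 t3 t4 t5 = (t0*t2*t5 + (t0*t2+t0*t5+t2*t5)*(t3+t4) + t0*t3*t4) + t1 * (t0*t3 + t0*t4 + t2*t3 + t2*t4 + t2*t5 + t3*t4 + t3*t5 + t4*t5)) by (unfold E6Z; ring).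
rewrite HE; clear HE.
assert (HS : (t0+t1+t2+t3+t4+t5)^2 = (t0*t3 + t0*t4 + t2*t3 + t2*t4 + t2*t5 + t3*t4 + t3*t5 + t4*t5) + (t0*t0 + 2*(t0*t1) + 2*(t0*t2) + t0*t3 + t0*t4 + 2*(t0*t5) + t1*t1 + 2*(t1*t2) + 2*(t1*t3) + 2*(t1*t4) + 2*(t1*t5) + t2*t2 + t2*t3 + t2*t4 + t2*t5 + t3*t3 + t3*t4 + t3*t5 + t4*t4 + t4*t5 + t5*t5)) by ring.
apply (combine _ _ _ (t0+t2+t5+t3+t4) (t0+t1+t2+t3+t4+t5)).
- lia.
- lia.
- repeat apply Z.add_nonneg_nonneg; apply Z.mul_nonneg_nonneg; lia.
- rewrite HS; apply le_plus; repeat apply Z.add_nonneg_nonneg; repeat apply Z.mul_nonneg_nonneg; lia.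
- lia.
- lia.
- apply (EA_bound t0 t2 t5 t3 t4); lia.
- lia.
- lia.
Qed.
Lemma caseZ2 (t0 t1 t2 t3 t4 t5 m : Z) : 0 <= t0 -> 0 <= t1 -> 0 <= t2 -> 0 <= t3 -> 0 <= t4 -> 0 <= t5 ->
  t0+t1+t2+t3+t4+t5 = 6*m -> 1000 <= m -> t2 <= 20 -> E6Z t0 t1 t2 t3 t4 t5 < 16 * m^3.
Proof. intros.
assert (HE : E6Z t0 t1 t2 t3 t4 t5 = (t0*t1*(t3+t4) + t3*t4*(t0+t1) + t5*(t0+t1)*(t3+t4)) + t2 * (t0*t3 + t0*t4 + t0*t5 + t1*t3 + t1*t4 + t1*t5 + t3*t5 + t4*t5)) by (unfold E6Z; ring).
rewrite HE; clear HE.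
assert (HS : (t0+t1+t2+t3+t4+t5)^2 = (t0*t3 + t0*t4 + t0*t5 + t1*t3 + t1*t4 + t1*t5 + t3*t5 + t4*t5) + (t0*t0 + 2*(t0*t1) + 2*(t0*t2) + t0*t3 + t0*t4 + t0*t5 + t1*t1 + 2*(t1*t2) + t1*t3 + t1*t4 + t1*t5 + t2*t2 + 2*(t2*t3) + 2*(t2*t4) + 2*(t2*t5) + t3*t3 + 2*(t3*t4) + t3*t5 + t4*t4 + t4*t5 + t5*t5)) by ring.
apply (combine _ _ _ (t0+t1+t3+t4+t5) (t0+t1+t2+t3+t4+t5)).
- lia.
- lia.
- repeat apply Z.add_nonneg_nonneg; apply Z.mul_nonneg_nonneg; lia.
- rewrite HS; apply le_plus; repeat apply Z.add_nonneg_nonneg; repeat apply Z.mul_nonneg_nonneg; lia.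
- lia.
- lia.
- apply (EB_bound t0 t1 t3 t4 t5); lia.
- lia.
- lia.
Qed.
Lemma caseZ3 (t0 t1 t2 t3 t4 t5 m : Z) : 0 <= t0 -> 0 <= t1 -> 0 <= t2 -> 0 <= t3 -> 0 <= t4 -> 0 <= t5 ->
  t0+t1+t2+t3+t4+t5 = 6*m -> 1000 <= m -> t3 <= 20 -> E6Z t0 t1 t2 t3 t4 t5 < 16 * m^3.
Proof. intros.
assert (HE : E6Z t0 t1 t2 t3 t4 t5 = (t4*t2*t5 + (t4*t2+t4*t5+t2*t5)*(t0+t1) + t4*t0*t1) + t3 * (t0*t1 + t0*t2 + t0*t4 + t0*t5 + t1*t2 + t1*t4 + t1*t5 + t2*t5)) by (unfold E6Z; ring).
rewrite HE; clear HE.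
assert (HS : (t0+t1+t2+t3+t4+t5)^2 = (t0*t1 + t0*t2 + t0*t4 + t0*t5 + t1*t2 + t1*t4 + t1*t5 + t2*t5) + (t0*t0 + t0*t1 + t0*t2 + 2*(t0*t3) + t0*t4 + t0*t5 + t1*t1 + t1*t2 + 2*(t1*t3) + t1*t4 + t1*t5 + t2*t2 + 2*(t2*t3) + 2*(t2*t4) + t2*t5 + t3*t3 + 2*(t3*t4) + 2*(t3*t5) + t4*t4 + 2*(t4*t5) + t5*t5)) by ring.
apply (combine _ _ _ (t4+t2+t5+t0+t1) (t0+t1+t2+t3+t4+t5)).
- lia.
- lia.
- repeat apply Z.add_nonneg_nonneg; apply Z.mul_nonneg_nonneg; lia.
- rewrite HS; apply le_plus; repeat apply Z.add_nonneg_nonneg; repeat apply Z.mul_nonneg_nonneg; lia.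
- lia.
- lia.
- apply (EA_bound t4 t2 t5 t0 t1); lia.
- lia.
- lia.
Qed.
Lemma caseZ4 (t0 t1 t2 t3 t4 t5 m : Z) : 0 <= t0 -> 0 <= t1 -> 0 <= t2 -> 0 <= t3 -> 0 <= t4 -> 0 <= t5 ->
  t0+t1+t2+t3+t4+t5 = 6*m -> 1000 <= m -> t4 <= 20 -> E6Z t0 t1 t2 t3 t4 t5 < 16 * m^3.
Proof. intros.
assert (HE : E6Z t0 t1 t2 t3 t4 t5 = (t3*t2*t5 + (t3*t2+t3*t5+t2*t5)*(t0+t1) + t3*t0*t1) + t4 * (t0*t1 + t0*t2 + t0*t3 + t0*t5 + t1*t2 + t1*t3 + t1*t5 + t2*t5)) by (unfold E6Z; ring).
rewrite HE; clear HE.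
assert (HS : (t0+t1+t2+t3+t4+t5)^2 = (t0*t1 + t0*t2 + t0*t3 + t0*t5 + t1*t2 + t1*t3 + t1*t5 + t2*t5) + (t0*t0 + t0*t1 + t0*t2 + t0*t3 + 2*(t0*t4) + t0*t5 + t1*t1 + t1*t2 + t1*t3 + 2*(t1*t4) + t1*t5 + t2*t2 + 2*(t2*t3) + 2*(t2*t4) + t2*t5 + t3*t3 + 2*(t3*t4) + 2*(t3*t5) + t4*t4 + 2*(t4*t5) + t5*t5)) by ring.
apply (combine _ _ _ (t3+t2+t5+t0+t1) (t0+t1+t2+t3+t4+t5)).
- lia.
- lia.
- repeat apply Z.add_nonneg_nonneg; apply Z.mul_nonneg_nonneg; lia.
- rewrite HS; apply le_plus; repeat apply Z.add_nonneg_nonneg; repeat apply Z.mul_nonneg_nonneg; lia.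
- lia.
- lia.
- apply (EA_bound t3 t2 t5 t0 t1); lia.
- lia.
- lia.
Qed.
Lemma caseZ5 (t0 t1 t2 t3 t4 t5 m : Z) : 0 <= t0 -> 0 <= t1 -> 0 <= t2 -> 0 <= t3 -> 0 <= t4 -> 0 <= t5 ->
  t0+t1+t2+t3+t4+t5 = 6*m -> 1000 <= m -> t5 <= 20 -> E6Z t0 t1 t2 t3 t4 t5 < 16 * m^3.
Proof. intros.
assert (HE : E6Z t0 t1 t2 t3 t4 t5 = (t0*t1*(t3+t4) + t3*t4*(t0+t1) + t2*(t0+t1)*(t3+t4)) + t5 * (t0*t2 + t0*t3 + t0*t4 + t1*t2 + t1*t3 + t1*t4 + t2*t3 + t2*t4)) by (unfold E6Z; ring).
rewrite HE; clear HE.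
assert (HS : (t0+t1+t2+t3+t4+t5)^2 = (t0*t2 + t0*t3 + t0*t4 + t1*t2 + t1*t3 + t1*t4 + t2*t3 + t2*t4) + (t0*t0 + 2*(t0*t1) + t0*t2 + t0*t3 + t0*t4 + 2*(t0*t5) + t1*t1 + t1*t2 + t1*t3 + t1*t4 + 2*(t1*t5) + t2*t2 + t2*t3 + t2*t4 + 2*(t2*t5) + t3*t3 + 2*(t3*t4) + 2*(t3*t5) + t4*t4 + 2*(t4*t5) + t5*t5)) by ring.
apply (combine _ _ _ (t0+t1+t3+t4+t2) (t0+t1+t2+t3+t4+t5)).
- lia.
- lia.
- repeat apply Z.add_nonneg_nonneg; apply Z.mul_nonneg_nonneg; lia.
- rewrite HS; apply le_plus; repeat apply Z.add_nonneg_nonneg; repeat apply Z.mul_nonneg_nonneg; lia.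
- lia.
- lia.
- apply (EB_bound t0 t1 t3 t4 t2); lia.
- lia.
- lia.
Qed.

End ZPart.

From mathcomp Require Import zify.
Require Import Defs.
Set Implicit Arguments. Unset Strict Implicit. Unset Printing Implicit Defensive.

Definition fib n (p : 'I_n -> 'I_6) (a : 'I_6) := #|[set x | p x == a]|.

Lemma sum_fib n (p : 'I_n -> 'I_6) (G : 'I_6 -> nat) :
  \sum_(x : 'I_n) G (p x) = \sum_(a : 'I_6) fib p a * G a.
Proof.
rewrite (partition_big p xpredT) //=; apply: eq_bigr => a _.
rewrite (eq_bigr (fun _ => G a)); last by move=> i /eqP ->.
by rewrite sum_nat_const /fib; congr (_ * _); apply: eq_card => x; rewrite inE.
Qed.

Lemma G26_card3 T : T \in G26 -> #|T| = 3.
Proof. by rewrite inE => /and5P [/eqP]. Qed.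

Lemma fiber6 n (e : {set 'I_n}) : #|e| = 3 ->
  #|[set f : {ffun 'I_3 -> 'I_n} | f @: setT == e]| = 6.
Proof.
move=> he.
have -> : [set f : {ffun 'I_3 -> 'I_n} | f @: setT == e] =
  [set f : {ffun 'I_3 -> 'I_n} in ffun_on (mem e) | injectiveb f].
  apply/setP => f; rewrite !inE; apply/idP/idP.
  - move/eqP=> fe; apply/andP; split.
      by apply/ffun_onP => x; rewrite -fe; apply: imset_f; rewrite inE.
    apply/injectiveP => x y fxy.
    have : #|f @: setT| == #|[set: 'I_3]| by rewrite fe he cardsT card_ord.
    by move/imset_injP => /(_ x y); apply; rewrite ?inE.
  - case/andP=> /ffun_onP fon /injectiveP finj.
    rewrite eqEcard; apply/andP; split.
      by apply/subsetP => _ /imsetP [x _ ->]; apply: fon.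
    by rewrite he card_imset // cardsT card_ord.
rewrite card_inj_ffuns_on card_ord. 
have -> : #|mem e| = 3 by rewrite -he. 
by [].
Qed.

Lemma cnt6 n (p : 'I_n -> 'I_6) :
  6 * #|blowup26 p| = #|[set f : {ffun 'I_3 -> 'I_n} | p @: (f @: setT) \in G26]|.
Proof.
rewrite -[in RHS]sum1_card.
rewrite (partition_big (I:= {ffun _ -> _}) (fun f : {ffun 'I_3 -> 'I_n} => f @: setT) (fun e => e \in blowup26 p)).
  rewrite [RHS](eq_bigr (fun _ => 6)).
    by rewrite sum_nat_const mulnC.
  move=> e eB; rewrite -[RHS](fiber6 (e := e)); last by move: eB; rewrite /blowup26 !inE => /andP [/eqP ->].
  rewrite -sum1_card; apply: eq_bigl => f; rewrite !in_set.
  apply/andP/idP => [[] //|/eqP fe]; split; last by rewrite fe.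
  by rewrite fe; move: eB; rewrite /blowup26 !inE => /andP [_].
move=> f; rewrite /blowup26 in_set => fP; rewrite in_set fP andbT.
have h3 := G26_card3 fP.
have h1 := leq_imset_card p (f @: setT).
have h2 := leq_imset_card f setT.
move: h2; rewrite cardsT card_ord => h2.
by rewrite eqn_leq h2 -[X in X <= _]h3 h1.
Qed.

Lemma sum_ffun3 (T : finType) (G : T -> T -> T -> nat) :
  \sum_(f : {ffun 'I_3 -> T}) G (f ord0) (f (inord 1)) (f (inord 2)) =
  \sum_x \sum_y \sum_z G x y z.
Proof.
rewrite [RHS](eq_bigr (fun x => \sum_(u : T * T) G x u.1 u.2)); last by move=> x _; rewrite pair_big.
rewrite pair_big /=.
pose h (u : T * (T * T)) : {ffun 'I_3 -> T} :=
  [ffun k : 'I_3 => nth u.1 [:: u.1; u.2.1; u.2.2] k].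
pose hi (f : {ffun 'I_3 -> T}) : T * (T * T) := (f ord0, (f (inord 1), f (inord 2))).
rewrite (reindex h).
  apply: eq_bigr => -[x [y z]] _; rewrite !ffunE /= !inordK //.
exists hi => [[x [y z]] _|f _].
  by rewrite /hi /h !ffunE /= !inordK.
apply/ffunP => k; rewrite /hi /h ffunE /=.
case: k => -[|[|[|//]]] Hk /=.
- by congr (f _); apply: val_inj.
- by congr (f _); apply: val_inj; rewrite /= inordK.
- by congr (f _); apply: val_inj; rewrite /= inordK.
Qed.

Lemma imset3 (T : finType) (f : 'I_3 -> T) :
  f @: setT = [set f ord0; f (inord 1); f (inord 2)].
Proof.
apply/setP => y; rewrite !inE; apply/imsetP/idP.
  case=> -[[|[|[|//]]] Hk] _ ->.
  - by rewrite (_ : Ordinal Hk = ord0) ?eqxx //; apply: val_inj.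
  - by rewrite (_ : Ordinal Hk = inord 1) ?eqxx ?orbT //; apply: val_inj; rewrite /= inordK.
  - by rewrite (_ : Ordinal Hk = inord 2) ?eqxx ?orbT //; apply: val_inj; rewrite /= inordK.
by move=> /orP [/orP [] | ] /eqP ->; eexists; rewrite ?inE.
Qed.

Lemma cnt_sum n (p : 'I_n -> 'I_6) :
  6 * #|blowup26 p| = \sum_(a : 'I_6) \sum_(b : 'I_6) \sum_(c : 'I_6)
     fib p a * fib p b * fib p c * ([set a; b; c] \in G26).
Proof.
rewrite cnt6 -sum1_card big_mkcond /=.
rewrite (eq_bigr (fun f : {ffun 'I_3 -> 'I_n} =>
   (fun x y z => nat_of_bool ([set p x; p y; p z] \in G26)) (f ord0) (f (inord 1)) (f (inord 2)))); last first.
  by move=> f _; rewrite inE imset3 ?imsetU ?imsetU1 ?imset_set1; case: ifP.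
rewrite (sum_ffun3 (fun x y z => nat_of_bool ([set p x; p y; p z] \in G26))).
rewrite (sum_fib p (fun a => \sum_(y : 'I_n) \sum_(z : 'I_n) nat_of_bool ([set a; p y; p z] \in G26))).
apply: eq_bigr => a _.
rewrite (sum_fib p (fun b => \sum_(z : 'I_n) nat_of_bool ([set a; b; p z] \in G26))) big_distrr /=.
apply: eq_bigr => b _.
rewrite (sum_fib p (fun c => nat_of_bool ([set a; b; c] \in G26))) big_distrr /=.
rewrite big_distrr /=; apply: eq_bigr => c _.
by rewrite !mulnA.
Qed.

Lemma set3E (T : finType) (a b c : T) : [set a; b; c] = [set x in [:: a; b; c]].
Proof. by apply/setP => x; rewrite !inE orbA. Qed.

Lemma card3 (T : finType) (a b c : T) : (#|[set a; b; c]| == 3) = uniq [:: a; b; c].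
Proof. rewrite set3E cardsE; apply/eqP/card_uniqP => //. Qed.

Lemma eq3 (T : finType) (a b c x y z : T) : uniq [:: a; b; c] -> uniq [:: x; y; z] ->
  ([set a; b; c] == [set x; y; z]) = [&& a \in [:: x; y; z], b \in [:: x; y; z] & c \in [:: x; y; z]].
Proof.
move=> u1 u2; rewrite eqEcard.
have -> : #|[set x; y; z]| <= #|[set a; b; c]|.
  by move: (card3 a b c) (card3 x y z); rewrite u1 u2 => /eqP -> /eqP ->.
rewrite andbT !subUset !sub1set set3E !inE.
by rewrite andbA.
Qed.

Definition in3 (a b c : nat) (s : seq nat) := [&& a \in s, b \in s & c \in s].
Definition g26n (a b c : nat) := [&& uniq [:: a; b; c], ~~ in3 a b c [:: 0;1;2],
  ~~ in3 a b c [:: 0;1;5], ~~ in3 a b c [:: 2;3;4] & ~~ in3 a b c [:: 3;4;5]].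

Lemma inord_in3 (a : 'I_6) i j k : i < 6 -> j < 6 -> k < 6 ->
  (a \in [:: inord i; inord j; inord k]) = (val a \in [:: i; j; k]).
Proof. by move=> *; rewrite !inE -!val_eqE /= !inordK. Qed.

Lemma uniq_inord i j k : i < 6 -> j < 6 -> k < 6 -> uniq [:: i; j; k] ->
  uniq [:: inord i; inord j; inord k : 'I_6].
Proof. by move=> *; rewrite -(map_inj_uniq val_inj) /= !inordK. Qed.

Lemma G26n (a b c : 'I_6) : ([set a; b; c] \in G26) = g26n a b c.
Proof.
rewrite /G26 in_set card3 /g26n.
have -> : uniq [:: val a; val b; val c] = uniq [:: a; b; c] by rewrite -(map_inj_uniq val_inj).
case U: (uniq [:: a; b; c]) => //=.
by rewrite !eq3 ?uniq_inord // !inord_in3.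
Qed.

Definition qt (a b c : nat) : bool :=
  sort leq [:: a; b; c] \in [:: [:: 0;1;3]; [:: 0;1;4]; [:: 0;2;3]; [:: 0;2;4];
   [:: 0;2;5]; [:: 0;3;4]; [:: 0;3;5]; [:: 0;4;5]; [:: 1;2;3]; [:: 1;2;4];
   [:: 1;2;5]; [:: 1;3;4]; [:: 1;3;5]; [:: 1;4;5]; [:: 2;3;5]; [:: 2;4;5]].

Lemma qt_all : all (fun a => all (fun b => all (fun c => g26n a b c == qt a b c) (iota 0 6)) (iota 0 6)) (iota 0 6).
Proof. by []. Qed.

Lemma qtE (a b c : 'I_6) : ([set a; b; c] \in G26) = qt a b c.
Proof.
rewrite G26n; apply/eqP.
have ha : val a \in iota 0 6 by rewrite mem_iota /=.
have hb : val b \in iota 0 6 by rewrite mem_iota /=.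
have hc : val c \in iota 0 6 by rewrite mem_iota /=.
by move/allP: qt_all => /(_ _ ha) /allP /(_ _ hb) /allP /(_ _ hc).
Qed.

Definition E6 (t0 t1 t2 t3 t4 t5 : nat) :=
  t0*t1*t3 + t0*t1*t4 + t0*t2*t3 + t0*t2*t4 + t0*t2*t5 + t0*t3*t4 + t0*t3*t5 + t0*t4*t5
+ t1*t2*t3 + t1*t2*t4 + t1*t2*t5 + t1*t3*t4 + t1*t3*t5 + t1*t4*t5 + t2*t3*t5 + t2*t4*t5.

Lemma sum6 (G : 'I_6 -> nat) :
  \sum_(i : 'I_6) G i = G (inord 0) + G (inord 1) + G (inord 2) + G (inord 3) + G (inord 4) + G (inord 5).
Proof.
rewrite !big_ord_recl big_ord0 addn0 !addnA.
by congr (_ + _ + _ + _ + _ + _); congr G; apply/val_inj; rewrite /= inordK.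
Qed.

Lemma poly6 (w : 'I_6 -> nat) :
  \sum_(a : 'I_6) \sum_(b : 'I_6) \sum_(c : 'I_6) w a * w b * w c * qt a b c
  = 6 * E6 (w (inord 0)) (w (inord 1)) (w (inord 2)) (w (inord 3)) (w (inord 4)) (w (inord 5)).
Proof.
rewrite !sum6 !inordK //=.
rewrite /E6.
move: (w (inord 0)) (w (inord 1)) (w (inord 2)) (w (inord 3)) (w (inord 4)) (w (inord 5)) => x0 x1 x2 x3 x4 x5.
lia.
Qed.

Lemma cnt_E6 n (p : 'I_n -> 'I_6) :
  6 * #|blowup26 p| = 6 * E6 (fib p (inord 0)) (fib p (inord 1)) (fib p (inord 2))
                            (fib p (inord 3)) (fib p (inord 4)) (fib p (inord 5)).
Proof.
rewrite cnt_sum -poly6.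
apply: eq_bigr => a _; apply: eq_bigr => b _; apply: eq_bigr => c _.
by rewrite qtE.
Qed.

Lemma E6Z_eq (t0 t1 t2 t3 t4 t5 : nat) :
  Z.of_nat (E6 t0 t1 t2 t3 t4 t5) = E6Z (Z.of_nat t0) (Z.of_nat t1) (Z.of_nat t2) (Z.of_nat t3) (Z.of_nat t4) (Z.of_nat t5).
Proof. rewrite /E6 /E6Z. rewrite !Nat2Z.inj_add !Nat2Z.inj_mul. reflexivity. Qed.

Lemma small_E6 (t0 t1 t2 t3 t4 t5 m : nat) : t0+t1+t2+t3+t4+t5 = 6*m -> 1000 <= m ->
  [|| t0 <= 20, t1 <= 20, t2 <= 20, t3 <= 20, t4 <= 20 | t5 <= 20] ->
  E6 t0 t1 t2 t3 t4 t5 < 16 * m^3.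
Proof.
move=> hs hm hi.
have hsZ : (Z.of_nat t0 + Z.of_nat t1 + Z.of_nat t2 + Z.of_nat t3 + Z.of_nat t4 + Z.of_nat t5 = 6 * Z.of_nat m)%Z by lia.
have hmZ : (1000 <= Z.of_nat m)%Z by lia.
have key : (E6Z (Z.of_nat t0) (Z.of_nat t1) (Z.of_nat t2) (Z.of_nat t3) (Z.of_nat t4) (Z.of_nat t5) < 16 * (Z.of_nat m)^3)%Z.
  case/or4P: hi => [h|h|h|/or3P [h|h|h]].
  - apply: caseZ0 => //; lia.
  - apply: caseZ1 => //; lia.
  - apply: caseZ2 => //; lia.
  - apply: caseZ3 => //; lia.
  - apply: caseZ4 => //; lia.
  - apply: caseZ5 => //; lia.
rewrite -E6Z_eq in key.
have -> : m^3 = m*m*m by rewrite !expnS expn0 muln1 mulnA.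
have e : (16 * Z.of_nat m ^ 3 = Z.of_nat (16 * (m*m*m)))%Z by rewrite !Nat2Z.inj_mul; ring.
rewrite e in key.
by apply/ltP; apply Nat2Z.inj_lt.
Qed.

Lemma sum_fibs n (p : 'I_n -> 'I_6) : \sum_(a : 'I_6) fib p a = n.
Proof.
have := sum_fib p (fun=> 1); rewrite sum1_card card_ord => h.
rewrite [RHS]h; by apply: eq_bigr => a _; rewrite muln1.
Qed.

Lemma blowup_ext n (p q : 'I_n -> 'I_6) : p =1 q -> blowup26 p = blowup26 q.
Proof.
move=> pq; apply/setP => e; rewrite /blowup26 !in_set.
by rewrite (eq_imset _ pq).
Qed.

Definition pbal m (x : 'I_(6 * m)) : 'I_6 := inord (x %/ m).

Lemma fib_pbal m (a : 'I_6) : 0 < m -> fib (@pbal m) a = m.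
Proof.
move=> m0.
have lt j : j < m -> a * m + j < 6 * m.
  move=> jm; have := ltn_ord a; nia.
pose f (j : 'I_m) : 'I_(6 * m) := Ordinal (lt j (ltn_ord j)).
rewrite /fib.
have -> : [set x | pbal x == a] = f @: setT.
  apply/setP => x; rewrite inE; apply/idP/imsetP.
  - move/eqP => hx.
    have hv : x %/ m = a.
      have hlt : x %/ m < 6 by rewrite ltn_divLR // mulnC.
      by rewrite -hx /pbal inordK.
    exists (Ordinal (ltn_pmod x m0)) => //.
    apply: val_inj => /=; rewrite {1}(divn_eq x m) hv; lia.
  - case=> j _ ->; rewrite /pbal /=.
    rewrite divnMDl // divn_small // addn0.
    by apply/eqP/val_inj; rewrite /= inordK.
rewrite card_imset ?cardsT ?card_ord //.
by move=> i j /(congr1 val) /= /addnI h; apply: val_inj.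
Qed.

Lemma E6_bal m : E6 m m m m m m = 16 * m ^ 3.
Proof. rewrite /E6 !expnS expn0 muln1. lia. Qed.

Lemma ord6_cases (a : 'I_6) (Q : 'I_6 -> bool) :
  Q a -> [|| Q (inord 0), Q (inord 1), Q (inord 2), Q (inord 3), Q (inord 4) | Q (inord 5)].
Proof.
have -> : a = inord (val a) by rewrite inord_val.
by case: a => -[|[|[|[|[|[|//]]]]]] ? /= ->; rewrite ?orbT.
Qed.

Lemma opt_big m : 1000 <= m ->
  exists p : 'I_(6 * m) -> 'I_6, is_G2 p /\ forall a, 21 <= fib p a.
Proof.
move=> hm; have m0 : 0 < m by lia.
pose P := [pred g : {ffun 'I_(6 * m) -> 'I_6} | [forall a, exists x, g x == a]].
pose g0 := finfun (@pbal m).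
have Pg0 : P g0.
  apply/forallP => a; have := fib_pbal a m0; rewrite /fib => h.
  have : 0 < #|[set x : 'I_(6 * m) | pbal x == a]| by rewrite h.
  case/card_gt0P => x; rewrite inE => hx.
  by apply/existsP; exists x; rewrite ffunE.
case: (arg_maxnP (fun g : {ffun 'I_(6 * m) -> 'I_6} => #|blowup26 g|) Pg0) => g Pg gmax.
have hb : #|blowup26 (@pbal m)| <= #|blowup26 g|.
  rewrite (@blowup_ext _ _ g0); first exact: gmax. by move=> x; rewrite ffunE.
exists (fun x => g x); split.
  split.
    move=> a; move/forallP: Pg => /(_ a) /existsP [x /eqP hx]; by exists x.
  move=> q sq; rewrite (@blowup_ext _ q (finfun q)); last by move=> x; rewrite ffunE.
  apply: gmax; apply/forallP => a; case: (sq a) => x hx.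
  by apply/existsP; exists x; rewrite ffunE hx.
move=> a; rewrite leqNgt; apply/negP => small.
have hs := sum_fibs (fun x => g x); rewrite sum6 in hs.
have hE := cnt_E6 (fun x => g x).
have hB := cnt_E6 (@pbal m); rewrite !fib_pbal // E6_bal in hB.
have := @small_E6 (fib (fun x => g x) (inord 0)) (fib (fun x => g x) (inord 1))
  (fib (fun x => g x) (inord 2)) (fib (fun x => g x) (inord 3)) (fib (fun x => g x) (inord 4))
  (fib (fun x => g x) (inord 5)) m hs hm.
have := @ord6_cases a (fun b => fib (fun x => g x) b <= 20) small => h /(_ h) hlt.
have e1 : blowup26 (fun x => g x) = blowup26 g by [].
rewrite e1 in hE.
lia.
Qed.

Lemma image_fact (k : nat) (V : finType) (f : 'I_k -> V) :
  exists k' (h : 'I_k -> 'I_k') (g : 'I_k' -> V), [/\ k' <= k, injective g & forall x, g (h x) = f x].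
Proof.
pose W := f @: [set: 'I_k].
have fW x : f x \in W by apply: imset_f; rewrite inE.
exists #|W|, (fun x => enum_rank_in (fW x) (f x)), (fun i => enum_val i).
split.
- by rewrite (leq_trans (leq_imset_card _ _)) // cardsT card_ord.
- exact: enum_val_inj.
- by move=> x; rewrite enum_rankK_in.
Qed.


Lemma tau_ge2P (T : finType) (E : {set {set T}}) :
  2 <= tau E <-> 2 <= #|T| /\ (forall X, transversal E X -> 2 <= #|X|).
Proof.
split.
- move=> h2; split.
    apply: leq_trans h2 _; rewrite /tau.
    apply: (big_ind (fun v => v <= #|T|)) => //.
      by move=> a b ha hb; rewrite geq_min ha.
    by move=> X _; apply: max_card.
  move=> X tX; apply: leq_trans h2 _; rewrite /tau.
  have : X \in index_enum {set T} by rewrite mem_index_enum.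
  elim: (index_enum {set T}) => //= j r IH; rewrite in_cons big_cons => /orP [/eqP <-|ir].
    by rewrite tX geq_minl.
  case: (transversal E j); last exact: IH.
  exact: leq_trans (geq_minr _ _) (IH ir).
- case=> hT hX; rewrite /tau.
  apply: (big_ind (fun v => 2 <= v)) => //.
    by move=> a b ha hb; rewrite leq_min ha hb.
Qed.

Section Img.
Variables (k k' : nat) (V : finType) (E : {set {set 'I_k}}) (H : {set {set V}}).
Variables (f : 'I_k -> V) (h : 'I_k -> 'I_k') (g : 'I_k' -> V).
Hypotheses (hf : hom E H f) (H3 : is3graph H) (E3 : is3graph E) (ginj : injective g)
  (gh : forall x, g (h x) = f x).

Definition img : {set {set 'I_k'}} := [set h @: (e : {set 'I_k}) | e in E].

Lemma gh_imset (A : {set 'I_k}) : g @: (h @: A) = f @: A.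
Proof. by rewrite -imset_comp; apply: eq_imset => x /=; rewrite gh. Qed.

Lemma img_contained : contained img H.
Proof.
exists g; split => // e' /imsetP [e eE ->].
by rewrite gh_imset; apply: hf.
Qed.

Lemma card_h_edge e : e \in E -> #|h @: e| = 3.
Proof.
move=> eE; have := H3 (hf eE); rewrite -gh_imset card_imset //.
Qed.

Lemma img3 : is3graph img.
Proof. by move=> e' /imsetP [e eE ->]; apply: card_h_edge. Qed.

Lemma h_inj_edge e : e \in E -> {in e &, injective h}.
Proof. by move=> eE; apply/imset_injP; rewrite card_h_edge // E3. Qed.

Lemma h_inj_core S : is_core E S -> {in S &, injective h}.
Proof.
move=> cS x y xS yS hxy; apply/eqP/negPn/negP => nxy.
case: (cS x y xS yS nxy) => e eE /andP [xe ye].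
by move/eqP: nxy; apply; apply: (h_inj_edge eE).
Qed.

Lemma img_core S : is_core E S -> is_core img (h @: S) /\ #|h @: S| = #|S|.
Proof.
move=> cS; split; last by rewrite card_in_imset //; apply: h_inj_core.
move=> _ _ /imsetP [x xS ->] /imsetP [y yS ->] nxy.
have nxy' : x != y by apply: contraNneq nxy => ->.
case: (cS x y xS yS nxy') => e eE /andP [xe ye].
exists (h @: e); first by apply: imset_f.
by rewrite !imset_f.
Qed.

Lemma img_hom (U : finType) (G : {set {set U}}) (phi : 'I_k' -> U) :
  hom img G phi -> hom E G (phi \o h).
Proof.
move=> hphi e eE; rewrite imset_comp; apply: hphi; exact: imset_f.
Qed.

Lemma img_tau S : is_core E S -> 2 <= #|S| -> 2 <= tau (induced E S) ->
  2 <= tau (induced img (h @: S)).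
Proof.
move=> cS S2 /tau_ge2P [_ hX]; apply/tau_ge2P; split.
  by case: (img_core cS) => _ hS; rewrite -hS in S2; apply: leq_trans S2 (max_card _).
move=> X' tX'.
pose X := S :&: h @^-1: X'.
have tX : transversal (induced E S) X.
  apply/forall_inP => e; rewrite inE => /andP [eE eS].
  have : h @: e \in induced img (h @: S).
    by rewrite inE imset_f //= imsetS.
  move/forall_inP: tX' => tX' /tX' /set0Pn [y]; rewrite inE => /andP [yX' /imsetP [x xe yx]].
  apply/set0Pn; exists x; rewrite !inE xe andbT (subsetP eS) //=.
  by rewrite -yx.
have := hX X tX => X2.
apply: leq_trans X2 _.
have <- : #|h @: X| = #|X|.
  apply: card_in_imset => x y; rewrite !inE => /andP [xS _] /andP [yS _].
  exact: (h_inj_core cS).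
apply: subset_leq_card; apply/subsetP => y /imsetP [x]; rewrite !inE => /andP [_ hx] yx.
by rewrite yx.
Qed.

End Img.

Definition pick3 (a b : nat) : nat :=
  head 0 [seq c <- iota 0 5 | [&& c != a, c != b & ~~ [&& a < 3, b < 3 & c < 3]]].

Lemma pick3_all : all (fun a => all (fun b => (a != b) ==>
  [&& pick3 a b < 5, pick3 a b != a, pick3 a b != b & ~~ [&& a < 3, b < 3 & pick3 a b < 3]])
  (iota 0 5)) (iota 0 5).
Proof. by []. Qed.

Lemma in_inord3 (a : 'I_5) : a \in [set inord 0; inord 1; inord 2] -> a < 3.
Proof. by rewrite !inE -!val_eqE /= !inordK // => /orP [/orP [] | ] /eqP ->. Qed.

Lemma K5_pair (a b : 'I_5) : a != b -> exists2 T, T \in K5minus & (a \in T) && (b \in T).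
Proof.
move=> ab.
have ha : val a \in iota 0 5 by rewrite mem_iota /=.
have hb : val b \in iota 0 5 by rewrite mem_iota /=.
have := allP pick3_all _ ha => /allP /(_ _ hb).
rewrite val_eqE ab /= => /and4P [c5 ca cb nc].
exists [set a; b; inord (pick3 a b)]; last by rewrite !inE !eqxx ?orbT.
rewrite /K5minus in_set card3; apply/andP; split.
  rewrite -(map_inj_uniq val_inj) /= inordK // !inE negb_or.
  by rewrite val_eqE ab eq_sym ca eq_sym cb.
apply/negP => /eqP eq3.
have : a \in [set a; b; inord (pick3 a b)] by rewrite !inE eqxx.
rewrite eq3 => /in_inord3 a3.
have : b \in [set a; b; inord (pick3 a b)] by rewrite !inE eqxx orbT.
rewrite eq3 => /in_inord3 b3.
have : inord (pick3 a b) \in [set a; b; inord (pick3 a b)] by rewrite !inE eqxx !orbT.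
rewrite eq3 => /in_inord3; rewrite inordK // => c3.
by move: nc; rewrite a3 b3 c3.
Qed.

Lemma M1_inj k (E : {set {set 'I_k}}) (V : finType) (H : {set {set V}}) (f : 'I_k -> V) :
  is3graph H -> inM1 E -> hom E H f -> injective f.
Proof.
move=> H3 [phi [[psi phipsi psiphi] eqE]] hf x y fxy.
apply/eqP/negPn/negP => nxy.
have nab : phi x != phi y by apply: contra nxy => /eqP /(can_inj phipsi) ->.
case: (K5_pair nab) => T TK /andP [aT bT].
pose e := psi @: T.
have phie : phi @: e = T.
  by rewrite -imset_comp (eq_imset _ psiphi) imset_id.
have eE : e \in E by rewrite eqE phie.
have T3 : #|T| = 3 by move: TK; rewrite /K5minus in_set => /andP [/eqP].
have e3 : #|e| = 3 by rewrite card_imset ?T3 //; exact: (can_inj psiphi).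
have xe : x \in e by rewrite -(phipsi x) imset_f.
have ye : y \in e by rewrite -(phipsi y) imset_f.
have finj : {in e &, injective f} by apply/imset_injP; rewrite (H3 _ (hf _ eE)) e3.
by move/eqP: nxy; apply; apply: finj.
Qed.

Lemma card_below (k N : nat) (u : 'I_k -> 'I_N) (e : {set 'I_k}) (c : nat) :
  {in e &, injective u} ->
  #|u @: e :&: [set i : 'I_N | i < c]| = #|[set x in e | u x < c]|.
Proof.
move=> uinj.
have -> : u @: e :&: [set i : 'I_N | i < c] = u @: [set x in e | u x < c].
  apply/setP => y; rewrite !inE; apply/andP/imsetP.
    by case=> /imsetP [x xe ->] xc; exists x => //; rewrite inE xe.
  by case=> x; rewrite inE => /andP [xe xc] ->; rewrite imset_f.
apply: card_in_imset => x y; rewrite !inE => /andP [xe _] /andP [ye _].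
exact: uinj.
Qed.

Lemma G1_blow k (E : {set {set 'I_k}}) n (psi : 'I_k -> 'I_n) :
  is3graph E -> hom E (G1 n) psi -> contained E (G1 (3 * k)).
Proof.
move=> E3 hpsi.
have p1 (x : 'I_k) : x < 3 * k by have := ltn_ord x; lia.
have p2 (x : 'I_k) : k + x < 3 * k by have := ltn_ord x; lia.
pose th x : 'I_(3 * k) := if psi x < n %/ 3 then Ordinal (p1 x) else Ordinal (p2 x).
have thA x : (th x < (3 * k) %/ 3) = (psi x < n %/ 3).
  rewrite mulKn // /th; case: ifP => /= _; [exact: ltn_ord | by rewrite ltnNge leq_addr].
have thinj : injective th.
  move=> x y; rewrite /th; have := ltn_ord x; have := ltn_ord y.
  by case: ifP => _; case: ifP => _ /= hy hx /(congr1 val) /= h; apply: val_inj => /=; lia.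
exists th; split => // e eE.
have := hpsi e eE; rewrite /G1 !in_set => /andP [/eqP c3 /eqP c1].
have e3 := E3 e eE.
have psiinj : {in e &, injective psi} by apply/imset_injP; rewrite c3 e3.
rewrite card_imset // e3 eqxx /=.
rewrite card_below; last by move=> x y _ _; apply: thinj.
rewrite card_below // in c1.
apply/eqP; rewrite -[RHS]c1; apply: eq_card => x; rewrite !inE thA //.
Qed.

Lemma G2_blow k (E : {set {set 'I_k}}) m (q : 'I_k -> 'I_6) (ps : 'I_(6 * m) -> 'I_6) :
  0 < m -> is3graph E -> (forall e, e \in E -> q @: e \in G26) ->
  (forall a, k <= fib ps a) -> contained E (blowup26 ps).
Proof.
move=> m0 E3 hq hfib.
have h0 : 0 < 6 * m by lia.
pose z0 : 'I_(6 * m) := Ordinal h0.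
pose F (x : 'I_k) := [set y | q y == q x].
pose G (x : 'I_k) := [set z | ps z == q x].
pose th x := nth z0 (enum (G x)) (index x (enum (F x))).
have ix x : index x (enum (F x)) < size (enum (F x)) by rewrite index_mem mem_enum inE.
have sz x : size (enum (F x)) <= size (enum (G x)).
  rewrite -!cardE; apply: leq_trans (hfib (q x)).
  by rewrite (leq_trans (max_card _)) // card_ord.
have thq x : ps (th x) = q x.
  have : th x \in enum (G x) by apply: mem_nth; apply: leq_trans (ix x) (sz x).
  by rewrite mem_enum inE => /eqP.
have thinj : injective th.
  move=> x y hxy.
  have qxy : q y = q x by rewrite -thq -hxy thq.
  have FG : F y = F x /\ G y = G x by split; apply/setP => z; rewrite !inE qxy.
  move: hxy; rewrite /th; case: FG => -> -> /eqP.
  rewrite nth_uniq ?enum_uniq //; last 2 first.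
  - exact: leq_trans (ix x) (sz x).
  - have := ix y; rewrite /F qxy => iy; apply: leq_trans iy (sz x).
  move/eqP => hi.
  have yF : y \in enum (F x) by rewrite mem_enum inE qxy.
  have xF : x \in enum (F x) by rewrite mem_enum inE.
  by rewrite -(nth_index x xF) hi (nth_index x yF).
exists th; split => // e eE.
rewrite /blowup26 in_set card_imset // E3 // eqxx /=.
rewrite -imset_comp (eq_imset _ thq); exact: hq.
Qed.

Theorem lemma3p2 (V : finType) (H : {set {set V}}) :
  is3graph H -> (M_free H <-> M_hom_free H).
Proof.
move=> H3; split; last first.
  by move=> hh k E hM [f [_ hf]]; apply: (hh k E hM); exists f.
move=> hfree k E hM [f hf].
case: hM => [M1|[M2|M3]].
- apply: (hfree k E (or_introl M1)); exists f; split => //.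
  exact: M1_inj H3 M1 hf.
- case: M2 => E3 kb [S [S7 cS tS]].
  case: (image_fact f) => k' [h [g [k'k ginj gh]]].
  apply: (hfree k' (img E h)); last exact: img_contained hf ginj gh.
  right; left; split.
  + exact: img3 hf H3 ginj gh.
  + exact: leq_trans k'k kb.
  + case: (img_core hf H3 E3 ginj gh cS) => cS' cardS'.
    exists (h @: S); split => //; first by rewrite cardS'.
    by apply: (img_tau hf H3 E3 ginj gh cS) => //; rewrite S7.
- case: M3 => [[E3 kb [S [S6 cS]]] nG1 nG2].
  case: (image_fact f) => k' [h [g [k'k ginj gh]]].
  have k6 : 6 <= k by rewrite -S6; apply: leq_trans (max_card _) _; rewrite card_ord.
  apply: (hfree k' (img E h)); last exact: img_contained hf ginj gh.
  right; right; split.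
  + split.
    * exact: img3 hf H3 ginj gh.
    * exact: leq_trans k'k kb.
    * case: (img_core hf H3 E3 ginj gh cS) => cS' cardS'.
      by exists (h @: S); split => //; rewrite cardS'.
  + move=> n n1 [phi [_ hphi]].
    have := img_hom hphi => hpsi.
    apply: (nG1 (3 * k)); first by lia.
    exact: G1_blow E3 hpsi.
  + move=> n p n6 Gp [phi [_ hphi]].
    have hpsi := img_hom hphi.
    have hq : forall e, e \in E -> (p \o (phi \o h)) @: e \in G26.
      move=> e eE; have := hpsi e eE; rewrite /blowup26 in_set => /andP [_].
      by move=> hh; rewrite (_ : _ @: e = p @: ((phi \o h) @: e)) //; exact: imset_comp.
    have m0 : 999 < 1000 by [].
    case: (opt_big m0) => ps [Gps fps].
    apply: (nG2 (6 * 1000) ps) => //.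
    apply: (G2_blow (q := p \o (phi \o h))) => // a.
    apply: leq_trans (fps a).
    by apply: leq_trans kb _.
Qed.
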